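(* For integers $n,m\ge 3$ and positive integers $q_1,\dots,q_n,r_1,\dots,r_n,s_1,\dots,s_m,p_1,\dots,p_m$, $${\rm dim}_s\big(K_{n,n}^{-M}(q_1,\dots,q_n,r_1,\dots,r_n)\diamond K_{m,m}^{-M}(s_1,\dots,s_m,p_1,\dots,p_m)\big)=\sum_{i=1}^{n}\Big((q_i+r_i)\sum_{j=1}^{m}(s_j+p_j)\Big)-nm.$$
   Context: The modular product $G\diamond H$ has vertex set $V(G)\times V(H)$; distinct vertices $(g,h)$ and $(g',h')$ are adjacent iff ($g=g'$ and $hh'\in E(H)$), or ($gg'\in E(G)$ and $h=h'$), or ($gg'\in E(G)$ and $hh'\in E(H)$), or ($g\neq g'$, $h\neq h'$, $gg'\notin E(G)$ and $hh'\notin E(H)$). $K_{n,n}^{-M}(q_1,\dots,q_n,r_1,\dots,r_n)$ is the graph whose vertex set is a disjoint union of sets $X_1,\dots,X_n,Y_1,\dots,Y_n$ with $|X_i|=q_i$, $|Y_i|=r_i$, where each $X_i$ and each $Y_i$ induces a clique, every vertex of $X_i$ is adjacent to every vertex of $Y_j$ whenever $i\neq j$, and there are no other edges. ${\rm dim}_s(X)$ is the strong metric dimension: the minimum size of $S\subseteq V(X)$ such that for all distinct $x,y$ some $z\in S$ has $d_X(y,z)=d_X(y,x)+d_X(x,z)$ or $d_X(x,z)=d_X(x,y)+d_X(y,z)$. *)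

(* Defs.v *)
From mathcomp Require Import all_boot.
Set Implicit Arguments. Unset Strict Implicit. Unset Printing Implicit Defensive.

Section Graphs.
Variable T : finType.
Variable e : rel T.

Fixpoint nball (x : T) (k : nat) : {set T} :=
  match k with
  | 0 => [set x]
  | k'.+1 => nball x k' :|: [set z | [exists w in nball x k', e w z]]
  end.

(* graph distance: least k with y within k steps of x
   (returns #|T| if y is unreachable; irrelevant for connected graphs) *)
Definition dist (x y : T) : nat := find (fun k => y \in nball x k) (iota 0 #|T|).

Definition strong_resolving (S : {set T}) : bool :=
  [forall x, forall y, (x != y) ==>
     [exists z in S, (dist y z == dist y x + dist x z)
                  || (dist x z == dist x y + dist y z)]].

Lemma strong_resolving_exists :
  exists k, [exists S : {set T}, strong_resolving S && (#|S| == k)].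
Proof.
exists #|[set: T]|; apply/existsP; exists [set: T]; rewrite eqxx andbT.
apply/forallP => x; apply/forallP => y; apply/implyP => _.
apply/existsP; exists x; rewrite in_setT /=.
have -> : dist x x = 0.
  rewrite /dist; have : 0 < #|T| by apply/card_gt0P; exists x.
  by case: #|T| => // k _ /=; rewrite inE eqxx.
by rewrite addn0 eqxx.
Qed.

Definition sdim : nat := ex_minn strong_resolving_exists.

End Graphs.

Definition modprod (T1 T2 : finType) (e1 : rel T1) (e2 : rel T2) : rel (T1 * T2) :=
  fun u v =>
    (u != v) &&
    [|| (u.1 == v.1) && e2 u.2 v.2,
        e1 u.1 v.1 && (u.2 == v.2),
        e1 u.1 v.1 && e2 u.2 v.2
      | [&& u.1 != v.1, u.2 != v.2, ~~ e1 u.1 v.1 & ~~ e2 u.2 v.2]].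

(* vertex set of K_{n,n}^{-M}(q_1..q_n, r_1..r_n):
   inl (i, k) is the k-th vertex of X_i, inr (i, k) the k-th vertex of Y_i *)
Definition KMvert (n : nat) (q r : 'I_n -> nat) : finType :=
  ({i : 'I_n & 'I_(q i)} + {i : 'I_n & 'I_(r i)})%type.

Definition KMadj (n : nat) (q r : 'I_n -> nat) : rel (KMvert q r) :=
  fun x y =>
    match x, y with
    | inl a, inl b => (tag a == tag b) && (a != b)
    | inr a, inr b => (tag a == tag b) && (a != b)
    | inl a, inr b => tag a != tag b
    | inr a, inl b => tag a != tag b
    end.
Arguments KMadj {n} q r.

(* Main.v *)
Require Import Defs.
From mathcomp Require Import all_boot zify.
Set Implicit Arguments. Unset Strict Implicit. Unset Printing Implicit Defensive.

Section KM.
Variables (n : nat) (q r : 'I_n -> nat).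
Hypotheses (hq : forall i, 0 < q i) (hr : forall i, 0 < r i).

Definition side (x : KMvert q r) : bool := if x is inl _ then true else false.
Definition idx (x : KMvert q r) : 'I_n :=
  match x with inl a => tag a | inr a => tag a end.
Definition mk (b : bool) (k : 'I_n) : KMvert q r :=
  locked (if b then inl (existT _ k (Ordinal (hq k))) else inr (existT _ k (Ordinal (hr k)))).
Arguments mk : simpl never.
Lemma side_mk b k : side (mk b k) = b. Proof. by rewrite /mk -lock; case: b. Qed.
Lemma idx_mk b k : idx (mk b k) = k. Proof. by rewrite /mk -lock; case: b. Qed.

Lemma KMc x y : (x == y) || KMadj q r x y = ((side x == side y) == (idx x == idx y)).
Proof.
case: x y => [a|a] [b|b] /=.
- case: (eqVneq a b) => [->|ne]; first by rewrite !eqxx.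
  have -> : (inl a == inl b :> KMvert q r) = false.
    by apply/negbTE; apply: contra ne => /eqP [->].
  by rewrite /= andbT.
- by case: eqP.
- by case: eqP.
- case: (eqVneq a b) => [->|ne]; first by rewrite !eqxx.
  have -> : (inr a == inr b :> KMvert q r) = false.
    by apply/negbTE; apply: contra ne => /eqP [->].
  by rewrite /= andbT.
Qed.

Lemma idx_neq (x y : KMvert q r) : idx x != idx y -> x != y.
Proof. by apply: contra => /eqP ->. Qed.

Lemma card_KM : #|KMvert q r| = \sum_(i < n) (q i + r i).
Proof.
rewrite /KMvert card_sum !card_tagged !sumnE !big_map -!big_enum /=.
by rewrite big_split /=; congr (_ + _); apply: eq_bigr => i _; rewrite card_ord.
Qed.
End KM.

Lemma fresh N (a b : 'I_N) : 2 < N -> exists k : 'I_N, (k != a) && (k != b).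
Proof.
move=> hN.
have : 0 < #|~: [set a; b]|.
  have := cardsC [set a; b]; rewrite card_ord cards2.
  by case: (a != b) => /=; lia.
case/card_gt0P => k; rewrite !inE negb_or => h; by exists k.
Qed.

Section Dist.
Variables (T : finType) (e : rel T).

Lemma in_nballS x k y :
  (y \in nball e x k.+1) = (y \in nball e x k) || [exists w, (w \in nball e x k) && e w y].
Proof. by rewrite /= !inE. Qed.

Lemma in_nball0 x y : (y \in nball e x 0) = (y == x).
Proof. by rewrite /= inE. Qed.

Lemma in_nball1 x y : (y \in nball e x 1) = (y == x) || e x y.
Proof.
rewrite in_nballS in_nball0; congr (_ || _).
apply/existsP/idP => [[w /andP []]|h].
  by rewrite in_nball0 => /eqP ->.
by exists x; rewrite in_nball0 eqxx.
Qed.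

Lemma nball_mono x j k y : j <= k -> y \in nball e x j -> y \in nball e x k.
Proof.
elim: k => [|k IH]; first by rewrite leqn0 => /eqP ->.
rewrite leq_eqVlt => /orP [/eqP -> //|]; rewrite ltnS => /IH h /h.
by rewrite in_nballS => ->.
Qed.

Lemma dist_eq x y k : k < #|T| -> y \in nball e x k ->
  (forall j, j < k -> y \notin nball e x j) -> dist e x y = k.
Proof.
move=> hk hin hnot; rewrite /dist.
set P := (fun k0 => y \in nball e x k0).
have hasP : has P (iota 0 #|T|).
  by apply/hasP; exists k => //; rewrite mem_iota.
case: (ltngtP (find P (iota 0 #|T|)) k) => // h.
- have := nth_find 0 hasP; rewrite nth_iota; last by apply: ltn_trans hk.
  by rewrite add0n /P => hh; move: (hnot _ h); rewrite hh.
- have := before_find 0 h; rewrite nth_iota // add0n /P hin //.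
Qed.

Lemma dist0 x : 0 < #|T| -> dist e x x = 0.
Proof. by move=> h; apply: dist_eq => //; rewrite in_nball0. Qed.

Lemma dist1 x y : 1 < #|T| -> x != y -> e x y -> dist e x y = 1.
Proof.
move=> h ne exy; apply: dist_eq => //; first by rewrite in_nball1 exy orbT.
by case=> // _; rewrite in_nball0 eq_sym.
Qed.

Lemma notin_le x y k j : y \notin nball e x k -> j <= k -> y \notin nball e x j.
Proof. by move=> h hj; apply: contra h; apply: nball_mono. Qed.

Lemma dist2 x y w : 2 < #|T| -> x != y -> ~~ e x y -> e x w -> e w y -> dist e x y = 2.
Proof.
move=> h ne nexy exw ewy; apply: dist_eq => //.
  rewrite in_nballS; apply/orP; right; apply/existsP; exists w.
  by rewrite in_nball1 exw orbT.
move=> j hj; apply: (@notin_le _ _ 1) => //.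
by rewrite in_nball1 negb_or eq_sym ne.
Qed.

Lemma dist3 x y w1 w2 : 3 < #|T| -> x != y -> ~~ e x y ->
  (forall w, e x w -> ~~ e w y) -> e x w1 -> e w1 w2 -> e w2 y -> dist e x y = 3.
Proof.
move=> h ne nexy ncn e1 e2 e3; apply: dist_eq => //.
  rewrite in_nballS; apply/orP; right; apply/existsP; exists w2.
  by rewrite e3 andbT in_nballS; apply/orP; right; apply/existsP; exists w1;
     rewrite e2 in_nball1 e1 orbT.
move=> j hj; apply: (@notin_le _ _ 2) => //.
rewrite in_nballS in_nball1 negb_or negb_or eq_sym ne nexy /=.
apply/existsP => [[w /andP [hw ewy]]].
move: hw; rewrite in_nball1 => /orP [/eqP hw|hw].
  by move: nexy; rewrite -hw ewy.
by move: (ncn _ hw); rewrite ewy.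
Qed.
End Dist.

Lemma modprodE (T1 T2 : finType) (e1 : rel T1) (e2 : rel T2) u v :
  modprod e1 e2 u v = (u != v) &&
    (((u.1 == v.1) || e1 u.1 v.1) == ((u.2 == v.2) || e2 u.2 v.2)).
Proof.
case: u v => a b [a' b'] /=; rewrite /modprod /= xpair_eqE.
case: (eqVneq a a') => [->|h1]; case: (eqVneq b b') => [->|h2] //=;
  by case: (e1 _ _); case: (e2 _ _).
Qed.

Definition sd n (q r : 'I_n -> nat) (x y : KMvert q r) := side x == side y.
Definition si n (q r : 'I_n -> nat) (x y : KMvert q r) := idx x == idx y.
Definition cc n (q r : 'I_n -> nat) (x y : KMvert q r) := sd x y == si x y.

Definition D' (sd1 si1 sd2 si2 : bool) : nat :=
  if (sd1 == si1) == (sd2 == si2) then 1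
  else if [&& si1, si2 & sd1 != sd2] then 3 else 2.

Section Prod.
Variables (n m : nat) (q r : 'I_n -> nat) (s p : 'I_m -> nat).
Hypotheses (hn : 2 < n) (hm : 2 < m).
Hypotheses (hq : forall i, 0 < q i) (hr : forall i, 0 < r i).
Hypotheses (hs : forall j, 0 < s j) (hp : forall j, 0 < p j).

Local Notation V := (KMvert q r * KMvert s p)%type.
Local Notation P := (modprod (KMadj q r) (KMadj s p)).

Definition Dist (u v : V) : nat :=
  if u == v then 0 else D' (sd u.1 v.1) (si u.1 v.1) (sd u.2 v.2) (si u.2 v.2).

Lemma Padj (u v : V) : P u v = (u != v) && (cc u.1 v.1 == cc u.2 v.2).
Proof. by rewrite modprodE !KMc. Qed.

Lemma cn (u v : V) : u != v -> cc u.1 v.1 != cc u.2 v.2 ->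
  ~~ [&& si u.1 v.1, si u.2 v.2 & sd u.1 v.1 != sd u.2 v.2] ->
  exists w, P u w && P w v.
Proof.
case: u v => g h [g' h'] /= neq; rewrite /cc /sd /si => hc hcm.
have [k /andP [k1 k2]] := fresh (idx g) (idx g') hn.
have [l /andP [l1 l2]] := fresh (idx h) (idx h') hm.
case: (boolP ((side g == side g') == (side h == side h'))) => hpar.
  exists (mk hq hr (side g) k, mk hs hp (side h) l).
  rewrite !Padj /= !xpair_eqE /cc /sd /si !side_mk !idx_mk.
  have e1 : (mk hq hr (side g) k == g) = false by apply/negbTE/idx_neq; rewrite idx_mk.
  have e2 : (mk hq hr (side g) k == g') = false by apply/negbTE/idx_neq; rewrite idx_mk.
  rewrite [g == _]eq_sym e1 e2 (eq_sym (idx g)) (eq_sym (idx h)) (negbTE k1) (negbTE k2) (negbTE l1) (negbTE l2).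
  rewrite !eqxx /=.
  by move: hpar; case: (side g); case: (side g'); case: (side h); case: (side h').
have [hi1 hi2] : (idx g == idx g') = false /\ (idx h == idx h') = false.
  move: hc hcm hpar; case: (idx g == idx g'); case: (idx h == idx h');
  by case: (side g); case: (side g'); case: (side h); case: (side h').
rewrite hi1 hi2 in hc.
case: (boolP (side g == side g')) => hs1.
  exists (mk hq hr (~~ side g) k, h).
  rewrite !Padj /= !xpair_eqE /cc /sd /si !side_mk !idx_mk eqxx.
  have e1 : (mk hq hr (~~ side g) k == g) = false by apply/negbTE/idx_neq; rewrite idx_mk.
  have e2 : (mk hq hr (~~ side g) k == g') = false by apply/negbTE/idx_neq; rewrite idx_mk.
  rewrite [g == _]eq_sym e1 e2 (eq_sym (idx g)) (negbTE k1) (negbTE k2) hi2 !eqxx /=.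
  move: hc hs1; case: (side g); case: (side g'); case: (side h); case: (side h') => //.
exists (g, mk hs hp (~~ side h) l).
rewrite !Padj /= !xpair_eqE /cc /sd /si !side_mk !idx_mk eqxx.
have e1 : (mk hs hp (~~ side h) l == h) = false by apply/negbTE/idx_neq; rewrite idx_mk.
have e2 : (mk hs hp (~~ side h) l == h') = false by apply/negbTE/idx_neq; rewrite idx_mk.
rewrite [h == _]eq_sym e1 e2 (eq_sym (idx h)) (negbTE l1) (negbTE l2) hi1 !eqxx /= !andbF /=.
move: hc hs1; case: (side g); case: (side g'); case: (side h); case: (side h') => //.
Qed.

Lemma card_ge n0 (q0 r0 : 'I_n0 -> nat) : (forall i, 0 < q0 i) -> (forall i, 0 < r0 i) ->
  n0 * 2 <= #|KMvert q0 r0|.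
Proof.
move=> h1 h2; rewrite card_KM.
have -> : n0 * 2 = \sum_(i < n0) 2 by rewrite sum_nat_const card_ord.
by apply: leq_sum => i _; have := h1 i; have := h2 i; lia.
Qed.

Lemma cardV : 3 < #|{: V}|.
Proof.
rewrite card_prod; have := card_ge hq hr; have := card_ge hs hp.
move=> a b; have : 6 * 6 <= #|KMvert q r| * #|KMvert s p|; last by lia.
by apply: leq_mul; lia.
Qed.

Lemma nocn (u v : V) : [&& si u.1 v.1, si u.2 v.2 & sd u.1 v.1 != sd u.2 v.2] ->
  forall w, P u w -> ~~ P w v.
Proof.
case: u v => g h [g' h'] /=; rewrite /sd /si => /and3P [/eqP i1 /eqP i2 hs12] [w1 w2].
rewrite !Padj /= /cc /sd /si -i1 -i2 (eq_sym (idx w1)) (eq_sym (idx w2)).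
move=> /andP [_ hA]; apply/negP => /andP [_ hB]; move: hA hB hs12.
case: (idx g == idx w1); case: (idx h == idx w2);
by case: (side g); case: (side g'); case: (side h); case: (side h'); case: (side w1); case: (side w2).
Qed.

Lemma distP (u v : V) : dist P u v = Dist u v.
Proof.
have hT := cardV.
rewrite /Dist; case: (eqVneq u v) => [->|ne]; first by rewrite dist0 //; apply: leq_trans hT.
case: (boolP (cc u.1 v.1 == cc u.2 v.2)) => hc.
  rewrite dist1 //.
  - by move: hc; rewrite /D' /cc => ->.
  - by apply: leq_trans hT.
  - by rewrite Padj ne hc.
have hnadj : ~~ P u v by rewrite Padj ne (negbTE hc).
case: (boolP [&& si u.1 v.1, si u.2 v.2 & sd u.1 v.1 != sd u.2 v.2]) => hcm.
  have -> : D' (sd u.1 v.1) (si u.1 v.1) (sd u.2 v.2) (si u.2 v.2) = 3.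
    by move: hc; rewrite /D' /cc => /negbTE ->; rewrite hcm.
  case: u v ne hc hcm hnadj => g h [g' h'] /= ne hc hcm hnadj.
  have [k /andP [k1 _]] := fresh (idx g) (idx g) hn.
  have [l /andP [l1 _]] := fresh (idx h) (idx h) hm.
  set w1 := (mk hq hr (~~ side g) k, mk hs hp (~~ side h) l).
  have e1 : (g == w1.1) = false by rewrite eq_sym; apply/negbTE/idx_neq; rewrite idx_mk.
  move: (hcm); rewrite /sd /si => /and3P [/eqP i1 /eqP i2 hs12].
  have [w2 /andP [hw1 hw2]] : exists w, P w1 w && P w (g', h').
    apply: cn => /=.
    - rewrite xpair_eqE negb_and; apply/orP; left; apply/idx_neq.
      by rewrite idx_mk -i1.
    - rewrite /cc /sd /si. rewrite !side_mk !idx_mk -i1 -i2 (negbTE k1) (negbTE l1).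
      by move: hs12; case: (side g); case: (side g'); case: (side h); case: (side h').
    - by rewrite /si !idx_mk -i1 (negbTE k1).
  apply: (dist3 _ ne hnadj _ _ hw1 hw2) => //.
    by move=> w; apply: (nocn (u := (g, h)) (v := (g', h')) hcm).
  rewrite (Padj (g, h) w1) /= xpair_eqE e1 /= /cc /sd /si !side_mk !idx_mk (eq_sym (idx g)) (eq_sym (idx h)).
  by rewrite (negbTE k1) (negbTE l1); case: (side g); case: (side h).
have -> : D' (sd u.1 v.1) (si u.1 v.1) (sd u.2 v.2) (si u.2 v.2) = 2.
  by move: hc; rewrite /D' /cc => /negbTE ->; rewrite (negbTE hcm).
have [w /andP [h1 h2]] := cn ne hc hcm.
by apply: (dist2 _ ne hnadj h1 h2); apply: ltnW.
Qed.
End Prod.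

Lemma mk_eq n (q r : 'I_n -> nat) (hq : forall i, 0 < q i) (hr : forall i, 0 < r i) b b' k k' :
  (mk hq hr b k == mk hq hr b' k') = (b == b') && (k == k').
Proof.
apply/eqP/andP => [h|[/eqP -> /eqP -> //]]; split; apply/eqP.
  by have := congr1 (fun x => side x) h; rewrite !side_mk.
by have := congr1 (fun x => idx x) h; rewrite !idx_mk.
Qed.

Lemma D'_pos a b c d : 0 < D' a b c d.
Proof. by rewrite /D'; case: ifP => //; case: ifP. Qed.

Section Main.
Variables (n m : nat) (q r : 'I_n -> nat) (s p : 'I_m -> nat).
Hypotheses (hn : 2 < n) (hm : 2 < m).
Hypotheses (hq : forall i, 0 < q i) (hr : forall i, 0 < r i).
Hypotheses (hs : forall j, 0 < s j) (hp : forall j, 0 < p j).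

Local Notation V := (KMvert q r * KMvert s p)%type.
Local Notation P := (modprod (KMadj q r) (KMadj s p)).

Lemma Lnot (x y z : V) : x != y -> si x.1 y.1 -> si x.2 y.2 -> z != x ->
  Dist y z != Dist y x + Dist x z.
Proof.
case: x y z => g h [g' h'] [g'' h''] /= nxy; rewrite /si => /eqP i1 /eqP i2 nzx.
have e1 : ((g', h') == (g, h)) = false by rewrite eq_sym (negbTE nxy).
have e2 : ((g, h) == (g'', h'')) = false by rewrite eq_sym (negbTE nzx).
rewrite /Dist /= e1 e2.
case: ifP => [_|ne]; first by rewrite eq_sym addn_eq0 negb_and -!lt0n !D'_pos.
rewrite /D' /sd /si -i1 -i2 (eq_sym (idx g)) (eq_sym (idx h)) !eqxx.
case: (idx g'' == idx g); case: (idx h'' == idx h);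
by case: (side g); case: (side g'); case: (side g''); case: (side h); case: (side h'); case: (side h'').
Qed.

Lemma lower (S : {set V}) : strong_resolving P S -> #|{: V}| - n * m <= #|S|.
Proof.
move=> HS.
set f := fun u : V => (idx u.1, idx u.2).
have inj : {in ~: S &, injective f}.
  move=> u v; rewrite !inE => uS vS /= [e1 e2]; apply/eqP; apply/negPn/negP => neq.
  move: HS => /forallP /(_ u) /forallP /(_ v) /implyP /(_ neq) /existsP [z /andP [zS hz]].
  have zu : z != u by apply: contraNneq uS => <-.
  have zv : z != v by apply: contraNneq vS => <-.
  move: hz; rewrite !distP //.
  have h1 := Lnot neq (introT eqP e1) (introT eqP e2) zu.
  have h2 : Dist u z != Dist u v + Dist v z.
    apply: Lnot => //; [by rewrite eq_sym | by rewrite /si e1 | by rewrite /si e2].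
  by rewrite (negbTE h1) (negbTE h2).
have hc : #|~: S| <= n * m.
  rewrite -(card_in_imset inj).
  have := max_card (f @: ~: S); rewrite card_prod !card_ord //.
have := cardsC S.
move=> <-; lia.
Qed.

Definition R1 := (mk hq hr true) @: [set: 'I_n].
Definition R2 := (mk hs hp true) @: [set: 'I_m].
Definition U : {set V} := setX R1 R2.

Lemma cardU : #|U| = n * m.
Proof.
rewrite /U cardsX /R1 /R2 !card_imset ?cardsT ?card_ord //.
  by apply: (can_inj (idx_mk hs hp true)).
by apply: (can_inj (idx_mk hq hr true)).
Qed.

Lemma SR : strong_resolving P (~: U).
Proof.
apply/forallP => x; apply/forallP => y; apply/implyP => nxy.
case: (boolP (x \in U)) => hx; last first.
  apply/existsP; exists x; rewrite inE hx /= !distP //.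
  by rewrite /Dist eqxx addn0 eqxx.
case: (boolP (y \in U)) => hy; last first.
  apply/existsP; exists y; rewrite inE hy /= !distP //.
  by rewrite /Dist eqxx addn0 eqxx orbT.
move: hx hy nxy; rewrite !inE /R1 /R2.
case: x y => g h [g' h'] /= /andP [/imsetP [i _ ->] /imsetP [j _ ->]]
  /andP [/imsetP [i' _ ->] /imsetP [j' _ ->]].
rewrite xpair_eqE !mk_eq /= => nij.
case: (eqVneq i i') => [ei|hi].
  subst i'.
  rewrite eqxx /= in nij.
  apply/existsP; exists (mk hq hr true i, mk hs hp false j').
  rewrite !inE /R1 /R2 /= !distP //.
  have -> : (mk hs hp false j' \in (mk hs hp true) @: [set: 'I_m]) = false.
    by apply/negbTE/imsetP => [[k _ /eqP]]; rewrite mk_eq.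
  rewrite andbF /= /Dist /D' /sd /si !xpair_eqE !mk_eq !side_mk !idx_mk /= !eqxx /=.
  by rewrite (eq_sym j') (negbTE nij).
case: (eqVneq j j') => [<-|hj].
  apply/existsP; exists (mk hq hr false i', mk hs hp true j).
  rewrite !inE /R1 /R2 /= !distP //.
  have -> : (mk hq hr false i' \in (mk hq hr true) @: [set: 'I_n]) = false.
    by apply/negbTE/imsetP => [[k _ /eqP]]; rewrite mk_eq.
  rewrite /= /Dist /D' /sd /si !xpair_eqE !mk_eq !side_mk !idx_mk /= !eqxx /=.
  by rewrite (eq_sym i') (negbTE hi).
have [k /andP [k1 k2]] := fresh j j' hm.
apply/existsP; exists (mk hq hr true i, mk hs hp false k).
rewrite !inE /R1 /R2 /= !distP //.
have -> : (mk hs hp false k \in (mk hs hp true) @: [set: 'I_m]) = false.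
  by apply/negbTE/imsetP => [[k0 _ /eqP]]; rewrite mk_eq.
rewrite andbF /= /Dist /D' /sd /si !xpair_eqE !mk_eq !side_mk !idx_mk /= !eqxx /=.
have a1 := negbTE hi; have a2 : (i' == i) = false by rewrite eq_sym.
have b1 := negbTE hj; have b2 : (j' == j) = false by rewrite eq_sym.
have c1 := negbTE k1; have c2 : (j == k) = false by rewrite eq_sym.
have d1 := negbTE k2; have d2 : (j' == k) = false by rewrite eq_sym.
by rewrite ?a1 ?a2 ?b1 ?b2 ?c1 ?c2 ?d1 ?d2.
Qed.

Lemma sdimP : sdim P = #|{: V}| - n * m.
Proof.
rewrite /sdim; case: ex_minnP => k /existsP [S /andP [HS /eqP <-]] Hmin.
apply/eqP; rewrite eqn_leq; apply/andP; split; last exact: lower.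
apply: Hmin; apply/existsP; exists (~: U); rewrite SR /=.
by rewrite (cardsCs (~: U)) setCK cardU.
Qed.
End Main.

Unset Implicit Arguments.

Theorem mainTheorem13 (n m : nat) (hn : 3 <= n) (hm : 3 <= m)
  (q r : 'I_n -> nat) (s p : 'I_m -> nat)
  (hq : forall i, 0 < q i) (hr : forall i, 0 < r i)
  (hs : forall j, 0 < s j) (hp : forall j, 0 < p j) :
  sdim (modprod (KMadj q r) (KMadj s p)) =
  \sum_(i < n) ((q i + r i) * \sum_(j < m) (s j + p j)) - n * m.
Proof.
rewrite (sdimP hn hm hq hr hs hp) card_prod !card_KM.
by rewrite big_distrl.
Qed.
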